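(* Let $H$ be a forest, let $(A,B)$ be a bipartition of $H$ with $|A|=|B|$, and let $n$ be an integer with $0\le n\le |A|$. Then there is a stable set $X$ of $H$ with $|X|=|A|$ and $|X\cap A|=n$.
   Context: A bipartition $(A,B)$ of $H$ is a partition of $V(H)$ into two stable sets. *)

(* Defs.v *)
From mathcomp Require Import all_boot.
Set Implicit Arguments. Unset Strict Implicit. Unset Printing Implicit Defensive.

Definition simple_graph (T : finType) (e : rel T) : Prop :=
  symmetric e /\ irreflexive e.

Definition is_graph_cycle (T : finType) (e : rel T) (c : seq T) : Prop :=
  3 <= size c /\ ucycle e c.

Definition forest (T : finType) (e : rel T) : Prop :=
  simple_graph e /\ forall c : seq T, ~ is_graph_cycle e c.

Definition stable (T : finType) (e : rel T) (X : {set T}) : Prop :=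
  forall x y, x \in X -> y \in X -> ~~ e x y.

Definition bipartition (T : finType) (e : rel T) (A B : {set T}) : Prop :=
  [/\ A :&: B = set0, A :|: B = [set: T], stable e A & stable e B].

(* Main.v *)
Require Import Defs.
From mathcomp Require Import all_boot.
From mathcomp Require Import zify.

Section Forest.
Variables (T : finType) (e : rel T).
Hypothesis esym : symmetric e.
Hypothesis eirr : irreflexive e.
Hypothesis nocyc : forall c : seq T, ~ is_graph_cycle e c.

Lemma ext_path (V : {set T}) m : forall x q, #|T| - size (x :: q) <= m ->
  x \in V -> path e x q -> uniq (x :: q) ->
  exists x' q', [/\ x' \in V, path e x' q', uniq (x' :: q') &
     forall w, w \in V -> e x' w -> w \in x' :: q'].
Proof.
elim: m => [|m IH] x q Hs xV pq uq;
  case: (pickP [pred w | (w \in V) && e x w && (w \notin x :: q)]) => [w /= /andP[/andP[wV exw] wn]|none].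
- have u2 : uniq (w :: x :: q) by rewrite cons_uniq wn uq.
  have := max_card (mem (w :: x :: q)).
  move/card_uniqP: u2 => ->. rewrite /= in Hs *. lia.
- exists x, q; split => // w wV exw; apply/negPn; apply/negP => wn.
  by have := none w; rewrite /= wV exw wn.
- have u2 : uniq (w :: x :: q) by rewrite cons_uniq wn uq.
  apply: (IH w (x :: q)) => //.
  + have := max_card (mem (w :: x :: q)).
    move/card_uniqP: u2 => ->. rewrite /= in Hs *. lia.
  + by rewrite /= pq esym exw.
- exists x, q; split => // w wV exw; apply/negPn; apply/negP => wn.
  by have := none w; rewrite /= wV exw wn.
Qed.

Lemma leaf (V : {set T}) x0 : x0 \in V ->
  exists v, v \in V /\ exists u, forall w, w \in V -> e v w -> w = u.
Proof.
move=> x0V.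
have [x [q [xV pq uq cl]]] := @ext_path V (#|T| - size [:: x0]) x0 [::] (leqnn _) x0V isT isT.
exists x; split => //.
case: q pq uq cl => [|y r] pq uq cl.
  exists x => w wV exw; have := cl w wV exw; by rewrite inE => /eqP.
exists y => w wV exw.
have := cl w wV exw; rewrite !inE => /orP[/eqP wx|/orP[/eqP //|wr]].
  by move: exw; rewrite wx eirr.
case: (eqVneq w y) => [//|wy].
move: pq uq; case/splitPr: wr => p1 p2 pq uq.
exfalso; apply: (nocyc [:: x, y & rcons p1 w]); split.
  by rewrite /= size_rcons.
apply/andP; split.
  rewrite /cycle rcons_cons /= -/(path e y _) rcons_path last_rcons -cats1.
  rewrite !cat_path; move: pq; rewrite /= cat_path => /andP[-> /andP[-> /= /andP[-> _]]].
  by rewrite esym exw.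
move: uq; rewrite /= -cats1 !mem_cat !cat_uniq /= !inE.
rewrite !mem_cat !inE orbF andbT.
rewrite !negb_or; case/and5P => h1 h2 h3 h4 _.
by case/and4P: h1 => -> -> -> _; case/and3P: h2 => -> -> _; rewrite h3; case/andP: h4 => -> _.
Qed.

Lemma gen k : forall A B : {set T}, #|A| = k -> #|B| = k -> forall n, n <= k ->
  exists XA XB : {set T}, [/\ XA \subset A, XB \subset B, #|XA| = n, #|XB| = k - n &
    forall x y, x \in XA -> y \in XB -> ~~ e x y].
Proof.
elim: k => [|k IH] A B cA cB n hn.
  exists set0, set0; split; rewrite ?sub0set ?cards0 //.
all: try (by move=> x y; rewrite inE).
all: try lia.
have step : forall A B : {set T}, #|A| = k.+1 -> #|B| = k.+1 -> forall v u, v \in A ->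
   (forall w, w \in A :|: B -> e v w -> w = u) -> forall n, n <= k.+1 ->
  exists XA XB : {set T}, [/\ XA \subset A, XB \subset B, #|XA| = n, #|XB| = k.+1 - n &
    forall x y, x \in XA -> y \in XB -> ~~ e x y].
  move=> {}A {}B {}cA {}cB v u vA hu [|n'] hn'.
    exists set0, B; split; rewrite ?sub0set ?cards0 ?subxx ?subn0 // => x y; by rewrite inE.
  have [b [bB bu]] : exists b, b \in B /\ (u \in B -> b = u).
    case uB: (u \in B); first by exists u.
    have : 0 < #|B| by rewrite cB.
    by case/card_gt0P => b bB; exists b.
  have cA' : #|A :\ v| = k by move: cA; rewrite (cardsD1 v) vA; lia.
  have cB' : #|B :\ b| = k by move: cB; rewrite (cardsD1 b) bB; lia.
  have [XA [XB [sA sB cXA cXB hX]]] := IH _ _ cA' cB' n' (hn').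
  exists (v |: XA), XB; split.
  - rewrite subUset sub1set vA /=; apply: subset_trans sA _; exact: subD1set.
  - apply: subset_trans sB _; exact: subD1set.
  - rewrite cardsU1 cXA.
    have -> : v \notin XA by apply/negP => /(subsetP sA); rewrite !inE eqxx.
    by [].
  - by rewrite cXB.
  - move=> x y; rewrite !inE => /orP[/eqP ->|xX] yX; last exact: hX.
    move/(subsetP sB): yX; rewrite !inE => /andP[yb yB].
    apply/negP => evy.
    have yu : y = u by apply: hu evy; rewrite inE yB orbT.
    by move: yb; rewrite (bu _) ?yu ?eqxx // -yu.
have [v [vV [u hu]]] : exists v, v \in A :|: B /\ exists u, forall w, w \in A :|: B -> e v w -> w = u.
  have : 0 < #|A| by rewrite cA.
  case/card_gt0P => a aA; apply: (@leaf _ a); by rewrite inE aA.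
move: vV; rewrite inE => /orP[vA|vB]; first exact: (step A B cA cB v u vA hu n hn).
have hu' : forall w, w \in B :|: A -> e v w -> w = u by move=> w; rewrite setUC; exact: hu.
have [XA [XB [sA sB cXA cXB hX]]] := step B A cB cA v u vB hu' (k.+1 - n) (leq_subr _ _).
exists XB, XA; split => //; first by rewrite cXB; lia.
move=> x y xX yX; rewrite esym; exact: hX.
Qed.
End Forest.

Theorem mainTheorem6 (T : finType) (e : rel T) (A B : {set T}) (n : nat) :
  forest e -> bipartition e A B -> #|A| = #|B| -> n <= #|A| ->
  exists X : {set T}, stable e X /\ #|X| = #|A| /\ #|X :&: A| = n.
Proof.
move=> [[esym eirr] nocyc] [AB0 ABT sA sB] cAB hn.
have [XA [XB [sXA sXB cXA cXB hX]]] := @gen T e esym eirr nocyc _ A B (erefl #|A|) (sym_equal cAB) n hn.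
have dis : forall x, x \in XB -> x \notin A.
  move=> x /(subsetP sXB) xB; apply/negP => xA.
  have : x \in A :&: B by rewrite inE xA xB.
  by rewrite AB0 inE.
exists (XA :|: XB); split; last split.
- move=> x y; rewrite !inE => /orP[xa|xb] /orP[ya|yb].
  + exact: sA (subsetP sXA _ xa) (subsetP sXA _ ya).
  + exact: hX.
  + rewrite esym; exact: hX.
  + exact: sB (subsetP sXB _ xb) (subsetP sXB _ yb).
- rewrite cardsU cXA cXB.
  have -> : XA :&: XB = set0.
    apply/setP => x; rewrite !inE; apply/negP => /andP[xa xb].
    by move: (dis x xb); rewrite (subsetP sXA _ xa).
  rewrite cards0; lia.
- have -> : (XA :|: XB) :&: A = XA.
    apply/setP => x; rewrite !inE.
    case xa: (x \in XA); first by rewrite (subsetP sXA _ xa).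
    by case xb: (x \in XB) => //=; rewrite (negbTE (dis x xb)).
  by [].
Qed.
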